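(* Define $h:\mathbb N\to\mathbb N$ by $$h(n)=\begin{cases}\lfloor\varphi n\rfloor, & n\in R_{2,0}\cup R_{1,0},\\ \lfloor(\varphi-1) n+2\rfloor, & n\in R_{2,2},\\ \lfloor(\varphi-1) n-1\rfloor, & n\in R_{3,1}.\end{cases}$$ Then $h$ is an $R_{i,j}$-permutation of $\mathbb N$ of order $4$ (first values $2,3,4,1,8,5,11,12,7,16,\dots$). Moreover its powers are $R_{i,j}$-permutations given by $$h^2(n)=\begin{cases}\lfloor(\varphi+1) n-1\rfloor, & n\in R_{1,0},\\ n+2, & n\in R_{2,2},\\ n-2, & n\in R_{2,0},\\ \lfloor(2-\varphi) n+1\rfloor, & n\in R_{3,1},\end{cases}\qquad h^3(n)=h^{-1}(n)=\begin{cases}\lfloor\varphi n+3\rfloor, & n\in R_{2,2},\\ \lfloor\varphi n-2\rfloor, & n\in R_{1,0},\\ \lfloor(\varphi-1) n+1\rfloor, & n\in R_{3,1}\cup R_{2,0}.\end{cases}$$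
   Context: $\mathbb N=\{1,2,\dots\}$, $\varphi=\frac{1+\sqrt5}{2}$, $F$ the Fibonacci numbers ($F(0)=0,F(1)=F(2)=1$). For $i\in\mathbb Z^{\ge0},j\in\mathbb Z$, $R_{i,j}$ is the range of $n\mapsto F(i+1)\lfloor n\varphi\rfloor+F(i)n-j$, $n\in\mathbb N$. An $R_{i,j}$-permutation is a permutation $\pi$ of $\mathbb N$ defined piecewise on a finite partition of $\mathbb N$ into sets $R_{i,j}$, with $\pi(n)=\lfloor(a\varphi+b)n+c\rfloor$ on each piece for integers $a,b,c$ depending on the piece. Powers denote iterated composition. *)

(* Defs.v *)
From Stdlib Require Import Reals Lra Lia ZArith Arith List ClassicalDescription.
Open Scope R_scope.

Definition phi : R := (1 + sqrt 5) / 2.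

(* floor of a real number, as an integer: up x is the unique integer with
   x < up x <= x + 1, so up x - 1 = floor x. *)
Definition floorR (x : R) : Z := (up x - 1)%Z.

Fixpoint F (n : nat) : nat :=
  match n with
  | O => O
  | S n' => match n' with
            | O => 1%nat
            | S n'' => (F n' + F n'')%nat
            end
  end.

Definition Rset (i : nat) (j : Z) (x : Z) : Prop :=
  exists m : nat, (1 <= m)%nat /\
    x = (Z.of_nat (F (S i)) * floorR (INR m * phi) + Z.of_nat (F i) * Z.of_nat m - j)%Z.

(* A piece: indices (i,j) of the set R_{i,j} and integer coefficients (a,b,c) of
   the formula n |-> floor((a phi + b) n + c). *)
Definition piece : Type := ((nat * Z) * (Z * Z * Z))%type.

Definition piece_set (p : piece) : Z -> Prop := Rset (fst (fst p)) (snd (fst p)).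

Definition is_partition_of_N (P : list piece) : Prop :=
  (forall n : nat, (1 <= n)%nat -> exists p, In p P /\ piece_set p (Z.of_nat n)) /\
  (forall p, In p P -> forall x : Z, piece_set p x -> (1 <= x)%Z) /\
  (forall k1 k2 : nat, (k1 < length P)%nat -> (k2 < length P)%nat -> k1 <> k2 ->
     forall (d : piece) (x : Z),
       ~ (piece_set (nth k1 P d) x /\ piece_set (nth k2 P d) x)).

(* pi is a permutation of N = {1,2,...} (values at 0 are irrelevant) *)
Definition perm_N (pi : nat -> nat) : Prop :=
  (forall n, (1 <= n)%nat -> (1 <= pi n)%nat) /\
  (forall n m, (1 <= n)%nat -> (1 <= m)%nat -> pi n = pi m -> n = m) /\
  (forall m, (1 <= m)%nat -> exists n, (1 <= n)%nat /\ pi n = m).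

Definition piece_formula (p : piece) (n : nat) : Z :=
  let '(_, (a, b, c)) := p in
  floorR ((IZR a * phi + IZR b) * INR n + IZR c).

Definition RPerm (pi : nat -> nat) : Prop :=
  perm_N pi /\
  exists P : list piece, is_partition_of_N P /\
    forall p, In p P -> forall n : nat, (1 <= n)%nat ->
      piece_set p (Z.of_nat n) -> Z.of_nat (pi n) = piece_formula p n.

Definition fpow (pi : nat -> nat) (k : nat) : nat -> nat := fun n => Nat.iter k pi n.

Definition has_order (pi : nat -> nat) (k : nat) : Prop :=
  (1 <= k)%nat /\
  (forall n, (1 <= n)%nat -> fpow pi k n = n) /\
  (forall l, (1 <= l)%nat -> (l < k)%nat -> exists n, (1 <= n)%nat /\ fpow pi l n <> n).

Definition inR (i : nat) (j : Z) (n : nat) : Prop := Rset i j (Z.of_nat n).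

(* The map h of the statement (value 0 outside the four sets; never used on N). *)
Definition h (n : nat) : nat :=
  if excluded_middle_informative (inR 2 0 n \/ inR 1 0 n) then
    Z.to_nat (floorR (phi * INR n))
  else if excluded_middle_informative (inR 2 2 n) then
    Z.to_nat (floorR ((phi - 1) * INR n + 2))
  else if excluded_middle_informative (inR 3 1 n) then
    Z.to_nat (floorR ((phi - 1) * INR n - 1))
  else 0%nat.

(* Main.v *)
Require Import Defs.
From Stdlib Require Import Reals ZArith Arith List.
From Stdlib Require Import Lra Lia Psatz ClassicalDescription.
Import ListNotations.
Open Scope R_scope.

Lemma sqrt5_facts : 0 <= sqrt 5 /\ sqrt 5 * sqrt 5 = 5.
Proof. split. apply sqrt_pos. apply sqrt_sqrt; lra. Qed.

Lemma phi_sq : phi * phi = phi + 1.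
Proof. destruct sqrt5_facts as [_ H]. unfold phi. nra. Qed.

Lemma phi_bounds : 8/5 < phi < 81/50.
Proof. destruct sqrt5_facts as [H0 H]. unfold phi. split; nra. Qed.

Lemma floor_spec x : IZR (floorR x) <= x < IZR (floorR x) + 1.
Proof. unfold floorR. destruct (archimed x) as [H1 H2]. rewrite minus_IZR. simpl. lra. Qed.

Lemma floor_unique x k : IZR k <= x < IZR k + 1 -> floorR x = k.
Proof.
  intros [H1 H2]. unfold floorR. destruct (archimed x) as [Hu1 Hu2].
  assert (k < up x)%Z by (apply lt_IZR; lra).
  assert (up x < k + 2)%Z by (apply lt_IZR; rewrite plus_IZR; simpl; lra).
  lia.
Qed.

Lemma nosol : forall n : nat, forall m k : Z, (0 < m)%Z -> (m <= Z.of_nat n)%Z -> (0 < k)%Z ->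
  (k*k <> m*k + m*m)%Z.
Proof.
  induction n; intros m k Hm Hn Hk E; [lia|].
  assert (m < k)%Z by nia. assert (k < 2*m)%Z by nia.
  apply (IHn (k - m)%Z m); nia.
Qed.

Lemma irr m k : (1 <= m)%Z -> IZR m * phi <> IZR k.
Proof.
  intros Hm E. destruct phi_bounds as [P1 P2].
  assert (Hk : (0 < k)%Z). { apply lt_IZR. rewrite <- E. apply Rmult_lt_0_compat; [apply IZR_lt; lia|lra]. }
  apply (nosol (Z.to_nat m) m k); try lia.
  apply eq_IZR. rewrite plus_IZR, !mult_IZR. rewrite <- E.
  replace (IZR m * phi * (IZR m * phi)) with (IZR m * IZR m * (phi * phi)) by ring.
  rewrite phi_sq. ring.
Qed.

Definition aZ (m : Z) : Z := floorR (IZR m * phi).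
Definition bZ (m : Z) : Z := (aZ m + m)%Z.

Lemma aZ_spec m : (1 <= m)%Z -> IZR (aZ m) < IZR m * phi < IZR (aZ m) + 1.
Proof.
  intros Hm. destruct (floor_spec (IZR m * phi)) as [H1 H2]. unfold aZ.
  split; [|lra]. destruct H1 as [H1|H1]; [lra|]. exfalso; apply (irr m (floorR (IZR m * phi))); auto.
Qed.

Lemma aZ_floor m : IZR (aZ m) <= IZR m * phi < IZR (aZ m) + 1.
Proof. apply floor_spec. Qed.

Ltac phis := pose proof phi_sq; pose proof phi_bounds.
Lemma mphi2 m : IZR m * phi * phi = IZR m * phi + IZR m.
Proof. rewrite Rmult_assoc, phi_sq. ring. Qed.

Lemma aZ_lt m m' : (m < m')%Z -> (aZ m < aZ m')%Z.
Proof.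
  intros H. destruct (aZ_floor m), (aZ_floor m'). phis.
  assert (IZR m + 1 <= IZR m') by (rewrite <- plus_IZR; apply IZR_le; lia).
  apply lt_IZR. nra.
Qed.

Lemma aZ_inj m m' : aZ m = aZ m' -> m = m'.
Proof.
  intros E. destruct (Z.lt_trichotomy m m') as [H|[H|H]]; auto;
  apply aZ_lt in H; lia.
Qed.

Lemma aZ_ge m : (1 <= m)%Z -> (m <= aZ m)%Z.
Proof.
  intros Hm. destruct (aZ_floor m). phis. assert (IZR m >= 1) by (apply Rle_ge, IZR_le; lia).
  assert (IZR m < IZR (aZ m) + 1) by nra.
  assert (m < aZ m + 1)%Z by (apply lt_IZR; rewrite plus_IZR; simpl; lra). lia.
Qed.

Lemma aa m : (1 <= m)%Z -> aZ (aZ m) = (aZ m + m - 1)%Z.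
Proof.
  intros Hm. destruct (aZ_spec m Hm). phis. pose proof (mphi2 m). change (floorR (IZR (aZ m) * phi) = (aZ m + m - 1)%Z). apply floor_unique.
  rewrite minus_IZR, plus_IZR. simpl. split; nra.
Qed.

Lemma ab m : (1 <= m)%Z -> aZ (bZ m) = (2 * aZ m + m)%Z.
Proof.
  intros Hm. destruct (aZ_spec m Hm). phis. pose proof (mphi2 m). unfold bZ. change (floorR (IZR (aZ m + m) * phi) = (2 * aZ m + m)%Z). apply floor_unique.
  rewrite !plus_IZR, mult_IZR. simpl. split; nra.
Qed.

Lemma beatty_disj k k' : (1 <= k)%Z -> (1 <= k')%Z -> aZ k <> bZ k'.
Proof.
  intros Hk Hk' E. unfold bZ in E.
  destruct (aZ_spec k Hk), (aZ_spec k' Hk'). phis. pose proof (mphi2 k). pose proof (mphi2 k').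
  rewrite E, plus_IZR in *.
  set (n := aZ k') in *.
  assert (G1 : IZR (n + k') < IZR (k + k')) by (rewrite !plus_IZR; nra).
  assert (G2 : IZR (k + k') < IZR (n + k' + 1)) by (rewrite !plus_IZR; nra).
  apply lt_IZR in G1. apply lt_IZR in G2. lia.
Qed.

Lemma beatty_cover n : (1 <= n)%Z ->
  (exists k, (1 <= k)%Z /\ n = aZ k) \/ (exists k, (1 <= k)%Z /\ n = bZ k).
Proof.
  intros Hn. phis. pose proof (mphi2 n).
  set (m := floorR (IZR (n+1) * (phi - 1))).
  destruct (floor_spec (IZR (n+1) * (phi - 1))) as [F1 F2]. fold m in F1, F2.
  rewrite plus_IZR in F1, F2. pose proof (mphi2 m).
  assert (Hn1 : 1 <= IZR n) by (apply IZR_le; lia).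
  destruct (Rle_or_lt (IZR m * phi) (IZR n)) as [C|C].
  - right. exists (n - m)%Z.
    assert (Hmn : (m < n)%Z) by (apply lt_IZR; nra).
    split; [lia|]. unfold bZ. 
    assert (aZ (n - m) = m); [|lia].
    unfold aZ. apply floor_unique. rewrite minus_IZR. split; nra.
  - left. exists m.
    assert (Hm : (1 <= m)%Z). { assert (0 < m)%Z by (apply lt_IZR; nra). lia. }
    split; auto. symmetry. unfold aZ. apply floor_unique. split; [lra|].
    assert (G : IZR m * phi <= IZR n + 1) by nra.
    destruct G as [G|G]; auto. exfalso. apply (irr m (n+1)); auto. rewrite plus_IZR; auto.
Qed.

Definition SS (k : nat) (m : Z) : Z :=
  match k with
  | 0%nat => (2 * aZ m + m - 2)%Z
  | 1%nat => bZ m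
  | 2%nat => (2 * aZ m + m)%Z
  | _ => (3 * aZ m + 2 * m - 1)%Z
  end.

Lemma bZ_ge m : (1 <= m)%Z -> (1 <= bZ m)%Z.
Proof. intros; unfold bZ; pose proof (aZ_ge m H); lia. Qed.
Lemma aZ_ge1 m : (1 <= m)%Z -> (1 <= aZ m)%Z.
Proof. intros; pose proof (aZ_ge m H); lia. Qed.

Lemma SS0 m : (1 <= m)%Z -> SS 0 m = aZ (aZ (aZ m)).
Proof. intros. unfold SS. rewrite (aa (aZ m)) by (apply aZ_ge1; auto). rewrite aa by auto. lia. Qed.
Lemma SS2 m : (1 <= m)%Z -> SS 2 m = aZ (bZ m).
Proof. intros. unfold SS. rewrite ab by auto. lia. Qed.
Lemma SS3 m : (1 <= m)%Z -> SS 3 m = aZ (aZ (bZ m)).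
Proof. intros. unfold SS. rewrite aa by (apply bZ_ge; auto). rewrite ab by auto. unfold bZ. lia. Qed.

Lemma SS_pos k m : (1 <= m)%Z -> (1 <= SS k m)%Z.
Proof. intros. pose proof (aZ_ge m H). destruct k as [|[|[|]]]; unfold SS, bZ; lia. Qed.

Lemma SS_mono k m m' : (m < m')%Z -> (SS k m < SS k m')%Z.
Proof. intros. pose proof (aZ_lt m m' H). destruct k as [|[|[|]]]; unfold SS, bZ; lia. Qed.

Lemma SS_uniq k k' m m' : (k < 4)%nat -> (k' < 4)%nat -> (1 <= m)%Z -> (1 <= m')%Z ->
  SS k m = SS k' m' -> k = k' /\ m = m'.
Proof.
  intros Hk Hk' Hm Hm' E.
  assert (k = k' -> m = m').
  { intros <-. destruct (Z.lt_trichotomy m m') as [L|[L|L]]; auto;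
    apply (SS_mono k) in L; lia. }
  destruct (Nat.eq_dec k k') as [e|ne]; [auto|exfalso].
  pose proof (aZ_ge1 m Hm) as a1. pose proof (aZ_ge1 m' Hm') as a1'.
  pose proof (bZ_ge m Hm) as b1. pose proof (bZ_ge m' Hm') as b1'.
  pose proof (aZ_ge1 _ a1) as aa1. pose proof (aZ_ge1 _ a1') as aa1'.
  pose proof (aZ_ge1 _ b1) as ab1. pose proof (aZ_ge1 _ b1') as ab1'.
  destruct k as [|[|[|[|]]]]; try lia; destruct k' as [|[|[|[|]]]]; try lia;
  try rewrite SS0 in E by auto; try rewrite SS2 in E by auto; try rewrite SS3 in E by auto;
  try rewrite SS0 in E by auto; try rewrite SS2 in E by auto; try rewrite SS3 in E by auto;
  unfold SS in E;
  repeat (apply aZ_inj in E);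
  first [ refine (beatty_disj _ _ _ _ E); auto | refine (beatty_disj _ _ _ _ (eq_sym E)); auto ].
Qed.

Lemma SS_cover n : (1 <= n)%Z -> exists k m, (k < 4)%nat /\ (1 <= m)%Z /\ n = SS k m.
Proof.
  intros Hn. destruct (beatty_cover n Hn) as [[k [Hk ->]]|[k [Hk ->]]].
  - destruct (beatty_cover k Hk) as [[k2 [Hk2 ->]]|[k2 [Hk2 ->]]].
    + destruct (beatty_cover k2 Hk2) as [[k3 [Hk3 ->]]|[k3 [Hk3 ->]]].
      * exists 0%nat, k3. rewrite SS0 by auto; repeat split; auto; lia.
      * exists 3%nat, k3. rewrite SS3 by auto; repeat split; auto; lia.
    + exists 2%nat, k2. rewrite SS2 by auto; repeat split; auto; lia.
  - exists 1%nat, k. repeat split; auto; lia.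
Qed.

Definition coef (j k : nat) : Z * Z * Z :=
  match j, k with
  | 1%nat, 0%nat => (1, -1, 2)%Z
  | 1%nat, 1%nat => (1, 0, 0)%Z
  | 1%nat, 2%nat => (1, 0, 0)%Z
  | 1%nat, _ => (1, -1, -1)%Z
  | 2%nat, 0%nat => (0, 1, 2)%Z
  | 2%nat, 1%nat => (1, 1, -1)%Z
  | 2%nat, 2%nat => (0, 1, -2)%Z
  | 2%nat, _ => (-1, 2, 1)%Z
  | _, 0%nat => (1, 0, 3)%Z
  | _, 1%nat => (1, 0, -2)%Z
  | _, _ => (1, -1, 1)%Z
  end.

Definition fexpr (abc : Z * Z * Z) (x : R) : R :=
  let '(a, b, c) := abc in (IZR a * phi + IZR b) * x + IZR c.

Lemma floor_pow j k m : (1 <= j <= 3)%nat -> (k < 4)%nat -> (1 <= m)%Z ->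
  floorR (fexpr (coef j k) (IZR (SS k m))) = SS ((k + j) mod 4) m.
Proof.
  intros Hj Hk Hm. destruct (aZ_spec m Hm) as [L U]. phis. pose proof (mphi2 m).
  destruct j as [|[|[|[|]]]]; try lia; destruct k as [|[|[|[|]]]]; try lia;
  unfold fexpr, coef; cbv beta iota zeta; simpl Nat.modulo; apply floor_unique; unfold SS, bZ;
  rewrite ?minus_IZR, ?plus_IZR, ?mult_IZR; split; nra.
Qed.


Definition code (k : nat) : nat * Z :=
  match k with 0%nat => (2%nat, 2%Z) | 1%nat => (1%nat, 0%Z) | 2%nat => (2%nat, 0%Z) | _ => (3%nat, 1%Z) end.

Lemma Rset_eq i j x : Defs.Rset i j x <-> exists m : Z, (1 <= m)%Z /\
  x = (Z.of_nat (F (S i)) * aZ m + Z.of_nat (F i) * m - j)%Z.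
Proof.
  split; intros [m [Hm E]].
  - exists (Z.of_nat m). split; [lia|]. rewrite E. unfold aZ. rewrite INR_IZR_INZ. reflexivity.
  - exists (Z.to_nat m). split; [lia|]. rewrite E. unfold aZ. rewrite INR_IZR_INZ, Z2Nat.id by lia. reflexivity.
Qed.

Lemma Rset_code k x : (k < 4)%nat ->
  (Defs.Rset (fst (code k)) (snd (code k)) x <-> exists m, (1 <= m)%Z /\ x = SS k m).
Proof.
  intros Hk. rewrite Rset_eq.
  destruct k as [|[|[|[|]]]]; try lia; simpl fst; simpl snd; simpl F; unfold SS, bZ;
  split; intros [m [Hm E]]; exists m; split; auto; lia.
Qed.

Lemma same_code k k' x : (k < 4)%nat -> (k' < 4)%nat ->
  Defs.Rset (fst (code k)) (snd (code k)) x -> Defs.Rset (fst (code k')) (snd (code k')) x -> k = k'.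
Proof.
  intros Hk Hk' H1 H2. apply Rset_code in H1; auto. apply Rset_code in H2; auto.
  destruct H1 as [m [Hm ->]]. destruct H2 as [m' [Hm' E]].
  apply (SS_uniq k k' m m'); auto.
Qed.

Lemma memb k k' m : (k < 4)%nat -> (k' < 4)%nat -> (1 <= m)%Z ->
  (Defs.Rset (fst (code k')) (snd (code k')) (Z.of_nat (Z.to_nat (SS k m))) <-> k' = k).
Proof.
  intros Hk Hk' Hm. rewrite Z2Nat.id by (pose proof (SS_pos k m Hm); lia). split.
  - intros H. apply (same_code k' k (SS k m)); auto. apply Rset_code; eauto.
  - intros ->. apply Rset_code; eauto.
Qed.

Lemma partition_gen f0 f1 f2 f3 :
  is_partition_of_N [((2%nat, 0%Z), f2); ((1%nat, 0%Z), f1); ((2%nat, 2%Z), f0); ((3%nat, 1%Z), f3)].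
Proof.
  split; [|split].
  - intros n Hn. destruct (SS_cover (Z.of_nat n) ltac:(lia)) as [k [m [Hk [Hm E]]]].
    assert (R : Defs.Rset (fst (code k)) (snd (code k)) (Z.of_nat n)) by (apply Rset_code; eauto).
    destruct k as [|[|[|[|]]]]; try lia.
    + exists ((2%nat, 2%Z), f0). split; [simpl; tauto|exact R].
    + exists ((1%nat, 0%Z), f1). split; [simpl; tauto|exact R].
    + exists ((2%nat, 0%Z), f2). split; [simpl; tauto|exact R].
    + exists ((3%nat, 1%Z), f3). split; [simpl; tauto|exact R].
  - intros p Hp x Hx.
    assert (exists k, (k < 4)%nat /\ Defs.Rset (fst (code k)) (snd (code k)) x) as [k [Hk R]].
    { simpl in Hp. unfold piece_set in Hx.
      destruct Hp as [<-|[<-|[<-|[<-|[]]]]]; [exists 2%nat|exists 1%nat|exists 0%nat|exists 3%nat];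
      split; auto; lia. }
    apply Rset_code in R; auto. destruct R as [m [Hm ->]]. apply SS_pos; auto.
  - intros k1 k2 H1 H2 Hne d x [A1 A2]. simpl in H1, H2.
    destruct k1 as [|[|[|[|]]]]; try lia; destruct k2 as [|[|[|[|]]]]; try lia;
    simpl in A1, A2; unfold piece_set in A1, A2; simpl in A1, A2;
    first
      [ pose proof (same_code 2 1 x ltac:(lia) ltac:(lia) A1 A2) as Z; discriminate
      | pose proof (same_code 2 0 x ltac:(lia) ltac:(lia) A1 A2) as Z; discriminate
      | pose proof (same_code 2 3 x ltac:(lia) ltac:(lia) A1 A2) as Z; discriminate
      | pose proof (same_code 1 2 x ltac:(lia) ltac:(lia) A1 A2) as Z; discriminate
      | pose proof (same_code 1 0 x ltac:(lia) ltac:(lia) A1 A2) as Z; discriminate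
      | pose proof (same_code 1 3 x ltac:(lia) ltac:(lia) A1 A2) as Z; discriminate
      | pose proof (same_code 0 2 x ltac:(lia) ltac:(lia) A1 A2) as Z; discriminate
      | pose proof (same_code 0 1 x ltac:(lia) ltac:(lia) A1 A2) as Z; discriminate
      | pose proof (same_code 0 3 x ltac:(lia) ltac:(lia) A1 A2) as Z; discriminate
      | pose proof (same_code 3 2 x ltac:(lia) ltac:(lia) A1 A2) as Z; discriminate
      | pose proof (same_code 3 1 x ltac:(lia) ltac:(lia) A1 A2) as Z; discriminate
      | pose proof (same_code 3 0 x ltac:(lia) ltac:(lia) A1 A2) as Z; discriminate ].
Qed.

Lemma INR_SS k m : (1 <= m)%Z -> INR (Z.to_nat (SS k m)) = IZR (SS k m).
Proof. intros Hm. rewrite INR_IZR_INZ, Z2Nat.id; auto. pose proof (SS_pos k m Hm); lia. Qed.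

Lemma h_step k m : (k < 4)%nat -> (1 <= m)%Z ->
  h (Z.to_nat (SS k m)) = Z.to_nat (SS ((k + 1) mod 4) m).
Proof.
  intros Hk Hm. unfold h, inR.
  pose proof (memb k 0 m Hk ltac:(lia) Hm) as M0.
  pose proof (memb k 1 m Hk ltac:(lia) Hm) as M1.
  pose proof (memb k 2 m Hk ltac:(lia) Hm) as M2.
  pose proof (memb k 3 m Hk ltac:(lia) Hm) as M3.
  simpl fst in M0, M1, M2, M3; simpl snd in M0, M1, M2, M3.
  rewrite INR_SS by auto.
  pose proof (floor_pow 1 k m ltac:(lia) Hk Hm) as FP.
  destruct k as [|[|[|[|]]]]; try lia; unfold coef, fexpr in FP; cbv beta iota zeta in FP.
  - destruct (excluded_middle_informative _) as [C|C].
    { exfalso. destruct C as [C|C]; [apply M2 in C|apply M1 in C]; lia. }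
    destruct (excluded_middle_informative _) as [C2|C2].
    2:{ exfalso. apply C2. apply M0. auto. }
    f_equal. rewrite <- FP. f_equal. simpl IZR. ring.
  - destruct (excluded_middle_informative _) as [C|C].
    2:{ exfalso. apply C. right. apply M1. auto. }
    f_equal. rewrite <- FP. f_equal. simpl IZR. ring.
  - destruct (excluded_middle_informative _) as [C|C].
    2:{ exfalso. apply C. left. apply M2. auto. }
    f_equal. rewrite <- FP. f_equal. simpl IZR. ring.
  - destruct (excluded_middle_informative _) as [C|C].
    { exfalso. destruct C as [C|C]; [apply M2 in C|apply M1 in C]; lia. }
    destruct (excluded_middle_informative _) as [C2|C2].
    { exfalso. apply M0 in C2. lia. }
    destruct (excluded_middle_informative _) as [C3|C3].
    2:{ exfalso. apply C3. apply M3. auto. }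
    f_equal. rewrite <- FP. f_equal. simpl IZR. ring.
Qed.

Lemma fpow_SS j k m : (k < 4)%nat -> (1 <= m)%Z ->
  fpow h j (Z.to_nat (SS k m)) = Z.to_nat (SS ((k + j) mod 4) m).
Proof.
  intros Hk Hm. induction j.
  - rewrite Nat.add_0_r, Nat.mod_small by auto. reflexivity.
  - unfold fpow in *. simpl Nat.iter. rewrite IHj. rewrite h_step by (auto; apply Nat.mod_upper_bound; lia).
    f_equal. f_equal. rewrite Nat.Div0.add_mod_idemp_l. f_equal. lia.
Qed.

Lemma decode n : (1 <= n)%nat -> exists k m, (k < 4)%nat /\ (1 <= m)%Z /\ n = Z.to_nat (SS k m).
Proof.
  intros Hn. destruct (SS_cover (Z.of_nat n) ltac:(lia)) as [k [m [Hk [Hm E]]]].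
  exists k, m. repeat split; auto. rewrite <- E. lia.
Qed.

Lemma dm x : (x = 4 * (x / 4) + x mod 4 /\ x mod 4 < 4)%nat.
Proof. split. apply Nat.div_mod; lia. apply Nat.mod_upper_bound; lia. Qed.

Lemma mod_cancel k k' j : (k < 4)%nat -> (k' < 4)%nat -> ((k + j) mod 4 = (k' + j) mod 4)%nat -> k = k'.
Proof. intros. pose proof (dm (k+j)). pose proof (dm (k'+j)). lia. Qed.

Lemma mod_back k j : (k < 4)%nat -> (((k + 3 * j) mod 4 + j) mod 4 = k)%nat.
Proof. intros. pose proof (dm (k + 3*j)). pose proof (dm ((k + 3 * j) mod 4 + j)). lia. Qed.

Lemma perm_pow j : perm_N (fpow h j).
Proof.
  split; [|split].
  - intros n Hn. destruct (decode n Hn) as [k [m [Hk [Hm ->]]]]. rewrite fpow_SS by auto.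
    pose proof (SS_pos ((k + j) mod 4) m Hm). lia.
  - intros n n' Hn Hn' E.
    destruct (decode n Hn) as [k [m [Hk [Hm ->]]]]. destruct (decode n' Hn') as [k' [m' [Hk' [Hm' ->]]]].
    rewrite !fpow_SS in E by auto.
    pose proof (SS_pos ((k + j) mod 4) m Hm). pose proof (SS_pos ((k' + j) mod 4) m' Hm').
    apply Z2Nat.inj in E; try lia.
    apply SS_uniq in E; try (apply Nat.mod_upper_bound; lia); auto.
    destruct E as [E1 E2]. apply mod_cancel in E1; auto. subst; auto.
  - intros n Hn. destruct (decode n Hn) as [k [m [Hk [Hm ->]]]].
    exists (Z.to_nat (SS ((k + 3 * j) mod 4) m)). split.
    + pose proof (SS_pos ((k + 3 * j) mod 4) m Hm). lia.
    + rewrite fpow_SS by (auto; apply Nat.mod_upper_bound; lia). rewrite mod_back; auto.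
Qed.

Definition Plist j : list piece :=
  [((2%nat, 0%Z), coef j 2); ((1%nat, 0%Z), coef j 1); ((2%nat, 2%Z), coef j 0); ((3%nat, 1%Z), coef j 3)].

Lemma pf_fexpr (x : nat * Z) abc n : piece_formula (x, abc) n = floorR (fexpr abc (INR n)).
Proof. destruct abc as [[a b] c]. reflexivity. Qed.

Lemma pow_formula j k n : (1 <= j <= 3)%nat -> (k < 4)%nat -> (1 <= n)%nat ->
  Defs.Rset (fst (code k)) (snd (code k)) (Z.of_nat n) ->
  Z.of_nat (fpow h j n) = floorR (fexpr (coef j k) (INR n)).
Proof.
  intros Hj Hk Hn R. apply Rset_code in R; auto. destruct R as [m [Hm E]].
  assert (n = Z.to_nat (SS k m)) as -> by lia.
  rewrite fpow_SS by auto. rewrite INR_SS by auto. rewrite floor_pow by auto.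
  rewrite Z2Nat.id; auto. pose proof (SS_pos ((k + j) mod 4) m Hm). lia.
Qed.

Lemma RPerm_pow j : (1 <= j <= 3)%nat -> RPerm (fpow h j).
Proof.
  intros Hj. split; [apply perm_pow|]. exists (Plist j). split; [apply partition_gen|].
  intros p Hp n Hn Hs. unfold Plist in Hp. simpl in Hp.
  destruct Hp as [<-|[<-|[<-|[<-|[]]]]]; rewrite pf_fexpr; unfold piece_set in Hs; simpl in Hs.
  - apply (pow_formula j 2); auto.
  - apply (pow_formula j 1); auto.
  - apply (pow_formula j 0); auto.
  - apply (pow_formula j 3); auto.
Qed.

Lemma aZ_val m v : IZR v <= IZR m * phi < IZR v + 1 -> aZ m = v.
Proof. apply floor_unique. Qed.

Lemma aZ1 : aZ 1 = 1%Z.  Proof. apply aZ_val. phis. split; lra. Qed.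
Lemma aZ2 : aZ 2 = 3%Z.  Proof. apply aZ_val. phis. split; lra. Qed.
Lemma aZ3 : aZ 3 = 4%Z.  Proof. apply aZ_val. phis. split; lra. Qed.
Lemma aZ4 : aZ 4 = 6%Z.  Proof. apply aZ_val. phis. split; lra. Qed.

Lemma hv n k m : (k < 4)%nat -> (1 <= m)%Z -> SS k m = Z.of_nat n ->
  h n = Z.to_nat (SS ((k + 1) mod 4) m).
Proof. intros Hk Hm E. assert (n = Z.to_nat (SS k m)) as -> by lia. apply h_step; auto. Qed.

Ltac hvt n k m := rewrite (hv n k m) by (try lia; unfold SS, bZ; rewrite ?aZ1, ?aZ2, ?aZ3, ?aZ4; reflexivity);
  simpl Nat.modulo; unfold SS, bZ; rewrite ?aZ1, ?aZ2, ?aZ3, ?aZ4.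

Lemma first_values : map h (seq 1 10) = [2; 3; 4; 1; 8; 5; 11; 12; 7; 16]%nat.
Proof.
  change (map h (seq 1 10)) with [h 1; h 2; h 3; h 4; h 5; h 6; h 7; h 8; h 9; h 10]%nat.
  hvt 1%nat 0%nat 1%Z. hvt 2%nat 1%nat 1%Z. hvt 3%nat 2%nat 1%Z. hvt 4%nat 3%nat 1%Z.
  hvt 5%nat 1%nat 2%Z. hvt 6%nat 0%nat 2%Z. hvt 7%nat 1%nat 3%Z. hvt 8%nat 2%nat 2%Z.
  hvt 9%nat 0%nat 3%Z. hvt 10%nat 1%nat 4%Z. reflexivity.
Qed.

Lemma one_SS : (1 = Z.to_nat (SS 0 1))%nat.
Proof. unfold SS. rewrite aZ1. reflexivity. Qed.

Lemma fpow_add a b n : fpow h a (fpow h b n) = fpow h (a + b) n.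
Proof. unfold fpow. rewrite Nat.iter_add. reflexivity. Qed.

Lemma fpow4 n : (1 <= n)%nat -> fpow h 4 n = n.
Proof.
  intros Hn. destruct (decode n Hn) as [k [m [Hk [Hm ->]]]]. rewrite fpow_SS by auto.
  f_equal. f_equal. pose proof (dm (k+4)). lia.
Qed.

Lemma form j k n (i : nat) (jj : Z) : (1 <= j <= 3)%nat -> (k < 4)%nat -> (1 <= n)%nat ->
  code k = (i, jj) -> inR i jj n -> Z.of_nat (fpow h j n) = floorR (fexpr (coef j k) (INR n)).
Proof.
  intros Hj Hk Hn Hc R. apply pow_formula; auto. rewrite Hc. exact R.
Qed.

Theorem theorem4p3 :
  is_partition_of_N
    [((2%nat, 0%Z), (1%Z, 0%Z, 0%Z)); ((1%nat, 0%Z), (1%Z, 0%Z, 0%Z));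
     ((2%nat, 2%Z), (1%Z, (-1)%Z, 2%Z)); ((3%nat, 1%Z), (1%Z, (-1)%Z, (-1)%Z))] /\
  RPerm h /\ has_order h 4 /\
  map h (seq 1 10) = [2; 3; 4; 1; 8; 5; 11; 12; 7; 16]%nat /\
  RPerm (fpow h 2) /\
  (forall n : nat, (1 <= n)%nat ->
     (inR 1 0 n -> Z.of_nat (fpow h 2 n) = floorR ((phi + 1) * INR n - 1)) /\
     (inR 2 2 n -> fpow h 2 n = (n + 2)%nat) /\
     (inR 2 0 n -> Z.of_nat (fpow h 2 n) = (Z.of_nat n - 2)%Z) /\
     (inR 3 1 n -> Z.of_nat (fpow h 2 n) = floorR ((2 - phi) * INR n + 1))) /\
  RPerm (fpow h 3) /\
  (forall n : nat, (1 <= n)%nat -> fpow h 3 (h n) = n /\ h (fpow h 3 n) = n) /\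
  (forall n : nat, (1 <= n)%nat ->
     (inR 2 2 n -> Z.of_nat (fpow h 3 n) = floorR (phi * INR n + 3)) /\
     (inR 1 0 n -> Z.of_nat (fpow h 3 n) = floorR (phi * INR n - 2)) /\
     ((inR 3 1 n \/ inR 2 0 n) ->
        Z.of_nat (fpow h 3 n) = floorR ((phi - 1) * INR n + 1))).
Proof.
  split; [apply partition_gen|].
  split; [exact (RPerm_pow 1 ltac:(lia))|].
  split.
  { split; [lia|]. split; [exact fpow4|].
    intros l Hl1 Hl2. exists 1%nat. split; [lia|]. rewrite one_SS, fpow_SS by lia.
    assert (Hl : (l = 1 \/ l = 2 \/ l = 3)%nat) by lia.
    destruct Hl as [ -> | [ -> | -> ] ]; simpl Nat.modulo; unfold SS, bZ; rewrite aZ1; simpl; lia. }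
  split; [exact first_values|].
  split; [exact (RPerm_pow 2 ltac:(lia))|].
  split.
  { intros n Hn. split; [|split; [|split]]; intros R.
    - rewrite (form 2 1 n 1 0) by (auto; lia). f_equal. unfold fexpr, coef; cbv beta iota zeta. simpl IZR. ring.
    - apply (Rset_code 0) in R; [|lia]. destruct R as [m [Hm E]].
      assert (n = Z.to_nat (SS 0 m)) as -> by lia. rewrite fpow_SS by (auto; lia).
      simpl Nat.modulo. pose proof (SS_pos 0 m Hm). unfold SS in *. lia.
    - apply (Rset_code 2) in R; [|lia]. destruct R as [m [Hm E]].
      assert (n = Z.to_nat (SS 2 m)) as -> by lia. rewrite fpow_SS by (auto; lia).
      simpl Nat.modulo. pose proof (SS_pos 0 m Hm). pose proof (SS_pos 2 m Hm). unfold SS in *. lia.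
    - rewrite (form 2 3 n 3 1) by (auto; lia). f_equal. unfold fexpr, coef; cbv beta iota zeta. simpl IZR. ring. }
  split; [exact (RPerm_pow 3 ltac:(lia))|].
  split.
  { intros n Hn. split.
    - change (h n) with (fpow h 1 n). rewrite fpow_add. apply fpow4; auto.
    - change (h (fpow h 3 n)) with (fpow h 1 (fpow h 3 n)). rewrite fpow_add. apply fpow4; auto. }
  intros n Hn. split; [|split]; intros R.
  - rewrite (form 3 0 n 2 2) by (auto; lia). f_equal. unfold fexpr, coef; cbv beta iota zeta. simpl IZR. ring.
  - rewrite (form 3 1 n 1 0) by (auto; lia). f_equal. unfold fexpr, coef; cbv beta iota zeta. simpl IZR. ring.
  - destruct R as [R|R].
    + rewrite (form 3 3 n 3 1) by (auto; lia). f_equal. unfold fexpr, coef; cbv beta iota zeta. simpl IZR. ring.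
    + rewrite (form 3 2 n 2 0) by (auto; lia). f_equal. unfold fexpr, coef; cbv beta iota zeta. simpl IZR. ring.
Qed.
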